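(* If $\alpha\in\mathrm{Aut}^0A_\Gamma$, then for any $a,b\in X$, $\langle\alpha_*b,a\rangle\ne0$ implies $a=b$ or $a\ge b$.
   Context: $\Gamma$ is a finite simplicial graph with vertex set $X$, $A_\Gamma$ its right-angled Artin group, $H_\Gamma$ its abelianization with basis the images of $X$, and $\langle-,-\rangle$ the inner product on $H_\Gamma$ making this basis orthonormal; $\alpha_*$ is the induced automorphism of $H_\Gamma$ and $b$ also denotes the image of $b$. $\mathrm{lk}(v)$ = neighbours, $\mathrm{st}(v)=\mathrm{lk}(v)\cup\{v\}$; $v\ge w$ iff $\mathrm{lk}(w)\subset\mathrm{st}(v)$ (extended to letters of $X\cup X^{-1}$ via their vertices). $\mathrm{Aut}^0A_\Gamma$ is the subgroup of $\mathrm{Aut}\,A_\Gamma$ generated by: transvections $\tau_{u,v}$ ($u,v\in X^{\pm1}$, $u\ge v$, distinct vertices; $v\mapsto vu$, other generators fixed), partial conjugations $c_{u,Y}$ ($u\in X^{\pm1}$, $Y$ a union of connected components of $\Gamma$ minus $\mathrm{st}$ of the vertex of $u$; $y\mapsto u^{-1}yu$ for $y\in Y$, others fixed), and inversions ($x\mapsto x^{-1}$ for one $x\in X$). *)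

(* Defs.v *)
(* Right-angled Artin group A_Gamma on a finite simplicial graph
   Gamma = (T, e): vertex set X = T (a finType), e symmetric irreflexive.
   Elements of A_Gamma are represented by words in X^{+-1}; an endomorphism of
   A_Gamma is represented by the images of the generators (a map T -> word). *)
From HB Require Import structures.
From mathcomp Require Import all_boot all_order all_algebra.
Set Implicit Arguments. Unset Strict Implicit. Unset Printing Implicit Defensive.
Import GRing.Theory Num.Theory.
Local Open Scope ring_scope.

Section RAAG.
Variable T : finType.
Variable e : rel T.

Definition simplicial_graph := symmetric e /\ irreflexive e.

(* letters of X \cup X^{-1}: (x, false) = x, (x, true) = x^{-1} *)
Definition letter := (T * bool)%type.
Definition word := seq letter.
Definition lvert (u : letter) : T := u.1.
Definition linv (u : letter) : letter := (u.1, ~~ u.2).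
Definition winv (w : word) : word := rev (map linv w).

Definition lk (v : T) : {set T} := [set z | e v z].
Definition st (v : T) : {set T} := v |: lk v.

Definition vge (v w : T) : bool := lk w \subset st v.

Definition endo := T -> word.
Definition subst_letter (phi : endo) (u : letter) : word :=
  if u.2 then winv (phi u.1) else phi u.1.
Definition subst (phi : endo) (w : word) : word := flatten (map (subst_letter phi) w).
Definition id_endo : endo := fun x => [:: (x, false)].
Definition comp_endo (phi psi : endo) : endo := fun x => subst phi (psi x).

Inductive gen :=
  | Transv of letter & letter     (* tau_{u,v} : v |-> v u *)
  | PConj of letter & {set T}     (* c_{u,Y} : y |-> u^{-1} y u, y in Y *)
  | Inversion of T.

Definition union_of_components (w : T) (Y : {set T}) : bool :=
  (Y \subset ~: st w) &&
  [forall y in Y, forall z, (e y z && (z \notin st w)) ==> (z \in Y)].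

Definition valid_gen (g : gen) : bool :=
  match g with
  | Transv u v => (lvert u != lvert v) && vge (lvert u) (lvert v)
  | PConj u Y => union_of_components (lvert u) Y
  | Inversion _ => true
  end.

(* action of a generator on the generators x of A_Gamma.
   For tau_{u,v} with v = y^{-1}: y^{-1} |-> y^{-1} u, i.e. y |-> u^{-1} y. *)
Definition gen_endo (g : gen) : endo :=
  match g with
  | Transv u v => fun x =>
      if x == lvert v then
        (if v.2 then [:: linv u; (x, false)] else [:: (x, false); u])
      else [:: (x, false)]
  | PConj u Y => fun x =>
      if x \in Y then [:: linv u; (x, false); u] else [:: (x, false)]
  | Inversion y => fun x => if x == y then [:: (x, true)] else [:: (x, false)]
  end.

Definition endo_of_gens (gs : seq gen) : endo := foldr comp_endo id_endo (map gen_endo gs).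

(* The generating set
   is closed under inverses (tau_{u,v}^{-1} = tau_{u^{-1},v}, c_{u,Y}^{-1} =
   c_{u^{-1},Y}, inversions are involutions), so its elements are exactly the
   finite compositions of generators. *)
Definition in_Aut0 (alpha : endo) : Prop :=
  exists gs : seq gen, all valid_gen gs /\ alpha = endo_of_gens gs.

(* abelianization H_Gamma = Z^X with orthonormal basis the images of X *)
Definition HG := {ffun T -> int}.
Definition basis_vec (x : T) : HG := [ffun y => (y == x)%:Z].
Definition abel (w : word) : HG :=
  [ffun y => \sum_(u <- w | u.1 == y) (if u.2 then -1 else 1)].
Definition alpha_star (alpha : endo) (h : HG) : HG :=
  [ffun y => \sum_(x : T) h x * abel (alpha x) y].
Definition inner (h k : HG) : int := \sum_(x : T) h x * k x.

End RAAG.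

(* Main.v *)
Require Import Defs.
From mathcomp Require Import all_boot all_order all_algebra.
Local Open Scope ring_scope.
Import GRing.Theory.

Section Aux.
Variable T : finType.
Variable e : rel T.

Definition sgn (u : letter T) : int := if u.2 then -1 else 1.

Lemma abelE (w : word T) y : abel w y = \sum_(u <- w | u.1 == y) sgn u.
Proof. by rewrite /abel ffunE. Qed.

Lemma abel_nil y : abel ([::] : word T) y = 0.
Proof. by rewrite abelE big_nil. Qed.

Lemma abel_cons (u : letter T) w y :
  abel (u :: w) y = (if u.1 == y then sgn u else 0) + abel w y.
Proof. by rewrite !abelE big_cons; case: ifP => _; rewrite ?add0r. Qed.

Lemma abel_cat (w1 w2 : word T) y : abel (w1 ++ w2) y = abel w1 y + abel w2 y.
Proof. by rewrite !abelE big_cat. Qed.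

Lemma abel_winv (w : word T) y : abel (winv w) y = - abel w y.
Proof.
elim: w => [|u w IH]; first by rewrite /winv /= abel_nil oppr0.
rewrite /winv /= rev_cons -cats1 abel_cat -/(winv w) IH abel_cons abel_cons abel_nil.
rewrite /linv /sgn /=; case: (u.1 == y); last by rewrite !addr0 add0r.
by case: u.2 => /=; rewrite addr0 opprD ?opprK addrC.
Qed.

Lemma sum_delta (c : T) (f : T -> int) (s : int) :
  \sum_(x : T) (if c == x then s else 0) * f x = s * f c.
Proof.
rewrite (bigD1 c) //= eqxx big1 ?addr0 // => x /negPf Hx.
by rewrite eq_sym Hx mul0r.
Qed.

Lemma abel_subst (phi : endo T) (w : word T) y :
  abel (subst phi w) y = \sum_(x : T) abel w x * abel (phi x) y.
Proof.
elim: w => [|u w IH].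
  by rewrite /subst /= abel_nil big1 // => x _; rewrite abel_nil mul0r.
rewrite /subst /= abel_cat -/(subst phi w) IH.
under eq_bigr => x _ do rewrite abel_cons mulrDl.
rewrite big_split /= sum_delta; congr (_ + _).
rewrite /subst_letter /sgn; case: u.2; last by rewrite mul1r.
by rewrite abel_winv mulN1r.
Qed.

Lemma vge_refl v : vge e v v.
Proof. by rewrite /vge /st subsetUr. Qed.

Lemma vge_trans (Hg : simplicial_graph e) u v w :
  vge e u v -> vge e v w -> vge e u w.
Proof.
case: Hg => Hsym Hirr.
rewrite /vge => Huv Hvw; apply/subsetP => x.
rewrite /lk inE => Hwx.
have : x \in st e v by apply: (subsetP Hvw); rewrite inE.
rewrite /st in_setU1 => /orP [/eqP Exv|]; last by move/(subsetP Huv).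
rewrite Exv in Hwx *.
have : w \in st e u by apply: (subsetP Huv); rewrite /lk inE Hsym.
rewrite /st in_setU1 => /orP [/eqP Ewu| Hw].
  by rewrite -Ewu /st in_setU1 /lk inE Hwx orbT.
have : u \in st e v by apply: (subsetP Hvw); move: Hw; rewrite /lk !inE Hsym.
rewrite /st in_setU1 => /orP [/eqP ->|Huv']; first by rewrite /st in_setU1 eqxx.
by move: Huv'; rewrite /st in_setU1 /lk !inE Hsym => ->; rewrite orbT.
Qed.

Definition goodP (phi : endo T) := forall a b, abel (phi b) a != 0 -> vge e a b.

Lemma abel_has (w : word T) a : abel w a != 0 -> has (fun u => u.1 == a) w.
Proof.
elim: w => [|u w IH]; first by rewrite abel_nil eqxx.
rewrite abel_cons /=; case: (u.1 == a) => //= H; apply: IH; by rewrite add0r in H.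
Qed.

Lemma gen_good (g : gen T) : valid_gen e g -> goodP (gen_endo g).
Proof.
move=> Hv a b; case: g Hv => [u v|u Y|y] /= Hv.
- case: ifP => Hb.
    case: (v.2) => /abel_has /=; rewrite ?orbF.
      case/orP => /eqP <-; last by rewrite vge_refl.
      by case/andP: Hv => _; rewrite /lvert (eqP Hb).
    case/orP => /eqP <-; first by rewrite vge_refl.
    by case/andP: Hv => _; rewrite /lvert (eqP Hb).
  by move/abel_has => /=; rewrite orbF => /eqP <-; rewrite vge_refl.
- case: ifP => _; last by move/abel_has => /=; rewrite orbF => /eqP <-; rewrite vge_refl.
  rewrite !abel_cons abel_nil /linv /sgn /=.
  case: (eqVneq b a) => [->|Hba]; first by rewrite vge_refl.
  rewrite add0r addr0.
  by case: (u.1 == a); case: (u.2) => /=; rewrite ?addr0 ?subrr ?addNr ?eqxx.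
- case: ifP => _ /abel_has /=; rewrite orbF => /eqP <-; by rewrite vge_refl.
Qed.

Lemma comp_good (Hg : simplicial_graph e) phi psi :
  goodP phi -> goodP psi -> goodP (comp_endo phi psi).
Proof.
move=> Hphi Hpsi a b; rewrite /comp_endo abel_subst => H.
case: (pickP (fun x => abel (psi b) x * abel (phi x) a != 0)) => [x Hx|H0];
  last by move: H; rewrite big1 ?eqxx // => x _; move: (H0 x) => /= /negbFE /eqP.
rewrite mulf_eq0 negb_or in Hx; case/andP: Hx => H1 H2.
exact: (vge_trans Hg _ _ _ (Hphi a x H2) (Hpsi x b H1)).
Qed.

Lemma id_good : goodP (@id_endo T).
Proof.
move=> a b; rewrite /id_endo abel_cons abel_nil addr0.
case: (eqVneq b a) => [-> _|Hba]; first exact: vge_refl.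
by rewrite eqxx.
Qed.


Lemma gens_good (Hg : simplicial_graph e) gs : all (valid_gen e) gs -> goodP (endo_of_gens gs).
Proof.
elim: gs => [|g gs IH] /=; first by move=> _; exact: id_good.
case/andP => Hg1 Hgs; apply: comp_good => //; [exact: gen_good | exact: IH].
Qed.

Lemma sum_delta_r (c : T) (f : T -> int) :
  \sum_(x : T) f x * (x == c)%:Z = f c.
Proof.
rewrite (bigD1 c) //= eqxx mulr1 big1 ?addr0 // => x /negPf Hx.
by rewrite Hx mulr0.
Qed.

Lemma sum_delta_l (c : T) (f : T -> int) :
  \sum_(x : T) (x == c)%:Z * f x = f c.
Proof.
rewrite (bigD1 c) //= eqxx mul1r big1 ?addr0 // => x /negPf Hx.
by rewrite Hx mul0r.
Qed.
End Aux.

Theorem lemma4p6 (T : finType) (e : rel T) (Hgraph : simplicial_graph e)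
  (alpha : endo T) (Halpha : in_Aut0 e alpha) (a b : T) :
  inner (alpha_star alpha (basis_vec b)) (basis_vec a) != 0 ->
  a = b \/ vge e a b.
Proof.
move=> H; right; case: Halpha => gs [Hall Ha].
have Hg := @gens_good T e Hgraph gs Hall; rewrite -Ha in Hg.
apply: Hg; move: H.
rewrite /inner.
under eq_bigr => x _ do rewrite /basis_vec ffunE.
rewrite sum_delta_r /alpha_star ffunE.
under eq_bigr => x _ do rewrite /basis_vec ffunE.
by rewrite sum_delta_l.
Qed.
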